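(* For every odd integer $k\ge 5$, the graph $F_1(k)$ is word-representable.
   Context: For odd $k\ge5$, $F_1(k)$ is the split graph with clique $C=\{c_1,\dots,c_{k-1}\}$ and independent set $I=\{b_1,b_2,a_1,\dots,a_{k-2}\}$, where $N(b_1)=\{c_1,\dots,c_{k-2}\}$, $N(b_2)=\{c_2,\dots,c_{k-1}\}$, and $N(a_i)=\{c_i,c_{i+1}\}$ for $1\le i\le k-2$. A graph $G=(V,E)$ is word-representable if there is a word $w$ over $V$ such that for all distinct $a,b\in V$, $ab\in E$ iff $a$ and $b$ alternate in $w$ (i.e. the subsequence of $w$ formed by all occurrences of $a$ and $b$ is $abab\cdots$ or $baba\cdots$). *)

(* Defs.v *)
From mathcomp Require Import all_boot.
Set Implicit Arguments. Unset Strict Implicit. Unset Printing Implicit Defensive.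

(* Vertices of F_1(k), 0-based:
   inl j            : c_{j+1},  j < k-1
   inr (inl j)      : a_{j+1},  j < k-2
   inr (inr false)  : b_1
   inr (inr true)   : b_2 *)
Definition F1V (k : nat) : finType := ('I_(k.-1) + ('I_(k.-2) + bool))%type.

Definition F1adj (k : nat) (x y : F1V k) : bool :=
  match x, y with
  | inl i, inl j => i != j :> nat
  | inl i, inr (inr false) | inr (inr false), inl i => (i <= k - 3)%N
  | inl i, inr (inr true)  | inr (inr true), inl i => (1 <= i)%N
  | inl i, inr (inl j) | inr (inl j), inl i => (i == j :> nat) || (i == j.+1 :> nat)
  | _, _ => false
  end.

Definition alternate (T : eqType) (w : seq T) (x y : T) : bool :=
  let s := filter (fun z => (z == x) || (z == y)) w in
  all (fun p => p.1 != p.2) (zip s (behead s)).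

Definition word_representable (T : finType) (e : rel T) : Prop :=
  exists w : seq T, (forall x : T, x \in w) /\
    forall x y : T, x != y -> (e x y <-> alternate w x y).

(* Main.v *)
Require Import Defs.
From mathcomp Require Import all_boot.
From mathcomp Require Import zify.
Set Implicit Arguments. Unset Strict Implicit. Unset Printing Implicit Defensive.

Definition nocons (T : eqType) (s : seq T) := all (fun p => p.1 != p.2) (zip s (behead s)).

Lemma nocons_cons (T : eqType) (a : T) s :
  nocons (a :: s) = (if s is b :: _ then a != b else true) && nocons s.
Proof. by case: s. Qed.

Definition between_ok (T : eqType) (f : nat -> option T) a n :=
  forall t1 t2 v, a <= t1 -> t1 < t2 -> t2 < a + n -> f t1 = Some v -> f t2 = Some v ->
  exists u v', [/\ t1 < u < t2, f u = Some v' & v' != v].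

Lemma pmap_nil (T : Type) (f : nat -> option T) a n :
  pmap f (iota a n) = [::] -> forall t, a <= t < a + n -> f t = None.
Proof.
elim: n a => [|n IH] a /=; first by move=> _ t; lia.
case E: (f a) => [c|] //= H t Ht.
case: (eqVneq t a) => [->//|ne]; apply: (IH a.+1) => //; lia.
Qed.

Lemma pmap_head (T : Type) (f : nat -> option T) a n c r :
  pmap f (iota a n) = c :: r -> exists u, [/\ a <= u < a + n, f u = Some c &
     forall v, a <= v < u -> f v = None].
Proof.
elim: n a => [|n IH] a //=.
case E: (f a) => [d|] /=.
  case=> <- _; exists a; split => //; [lia | move=> v; lia].
move=> /IH [u [Hu Hfu Hv]]; exists u; split => //; first lia.
move=> v Hv'; case: (eqVneq v a) => [->//|ne]; apply: Hv; lia.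
Qed.

Lemma nocons_between (T : eqType) (f : nat -> option T) n a :
  nocons (pmap f (iota a n)) <-> between_ok f a n.
Proof.
elim: n a => [|n IH] a.
  split => // _ t1 t2 v; lia.
rewrite /= .
case E: (f a) => [v0|] /=.
- rewrite nocons_cons; split.
  + move=> /andP [Hh Hn] t1 t2 v H1 H12 H2 F1 F2.
    case: (eqVneq t1 a) => [et|nt].
      subst t1; move: F1; rewrite E => -[ev]; subst v.
      case P: (pmap f (iota a.+1 n)) Hh => [|c r] Hh.
        by move: (pmap_nil P (t:=t2)); rewrite F2 => /(_ _)/esym; move=> /(_ ltac:(lia)).
      have [u [Hu Fu Hv]] := pmap_head P.
      have ut2 : u <= t2.
        case: (leqP u t2) => // lt; have := Hv t2; rewrite F2 => /(_ ltac:(lia)) //.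
      exists u, c; split => //; last by rewrite eq_sym.
      apply/andP; split; first lia.
      rewrite ltn_neqAle ut2 andbT; apply/eqP => eu; subst u.
      by move: Fu; rewrite F2 => -[] ec; move: Hh; rewrite ec eqxx.
    by apply: (proj1 (IH a.+1) Hn t1 t2 v) => //; lia.
  + move=> B; apply/andP; split.
      case P: (pmap f (iota a.+1 n)) => [|c r] //.
      have [u [Hu Fu Hv]] := pmap_head P.
      apply/negP => /eqP ec; subst c.
      have [u' [v' [Hu' Fu' _]]] := B a u v0 (leqnn a) ltac:(lia) ltac:(lia) E Fu.
      by rewrite Hv in Fu' => //; lia.
    apply/(IH a.+1) => t1 t2 v H1 H12 H2 F1 F2; apply: B => //; lia.
- rewrite IH; split.
  + move=> B t1 t2 v H1 H12 H2 F1 F2; apply: B => //; last lia.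
    case: (eqVneq t1 a) => [et|nt]; last lia.
    by subst t1; rewrite E in F1.
  + move=> B t1 t2 v H1 H12 H2 F1 F2; apply: B => //; lia.
Qed.

Section Ilv.
Variables (T : eqType) (x y : T) (x1 x2 x3 y1 y2 y3 N : nat).
Hypothesis xy : x != y.
Hypothesis hx : x1 < x2 < x3.
Hypothesis hy : y1 < y2 < y3.
Hypotheses (d1 : x1 != y1) (d2 : x1 != y2) (d3 : x1 != y3) (d4 : x2 != y1) (d5 : x2 != y2)
  (d6 : x2 != y3) (d7 : x3 != y1) (d8 : x3 != y2) (d9 : x3 != y3).

Definition fxy t := if t \in [:: x1; x2; x3] then Some x
   else if t \in [:: y1; y2; y3] then Some y else None.

Definition ilv := (x1 < y1 /\ y1 < x2 /\ x2 < y2 /\ y2 < x3 /\ x3 < y3) \/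
                  (y1 < x1 /\ x1 < y2 /\ y2 < x2 /\ x2 < y3 /\ y3 < x3).

Lemma fxy_some t v : fxy t = Some v ->
  (v = x /\ (t = x1 \/ t = x2 \/ t = x3)) \/ (v = y /\ (t = y1 \/ t = y2 \/ t = y3)).
Proof.
rewrite /fxy !inE.
case: ifP => [H [<-]|_]; first by left; split => //; case/or3P: H => /eqP ->; auto.
case: ifP => [H [<-]|//]; by right; split => //; case/or3P: H => /eqP ->; auto.
Qed.

Lemma fxy_y t : t = y1 \/ t = y2 \/ t = y3 -> fxy t = Some y.
Proof.
move=> Ht; rewrite /fxy !inE.
have -> : [|| t == x1, t == x2 | t == x3] = false.
  case: Ht => [->|[->|->]]; apply/negbTE; rewrite !negb_or; lia.
have -> // : [|| t == y1, t == y2 | t == y3].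
case: Ht => [->|[->|->]]; lia.
Qed.

Lemma fxy_x t : t = x1 \/ t = x2 \/ t = x3 -> fxy t = Some x.
Proof.
move=> Ht; rewrite /fxy !inE.
have -> // : [|| t == x1, t == x2 | t == x3].
case: Ht => [->|[->|->]]; lia.
Qed.

Lemma ilv_between : x3 < N -> y3 < N -> between_ok fxy 0 N <-> ilv.
Proof.
move=> xN yN; have yx : y != x by rewrite eq_sym.
split.
- move=> B.
  have gy : forall t1 t2, t1 < t2 -> t2 < N -> fxy t1 = Some x -> fxy t2 = Some x ->
      exists u, t1 < u < t2 /\ (u = y1 \/ u = y2 \/ u = y3).
    move=> t1 t2 H12 H2 F1 F2; have [u [v' [Hu Fu nv]]] := B t1 t2 x (leq0n _) H12 ltac:(lia) F1 F2.
    exists u; split => //; case: (fxy_some Fu) => [[ev _]|[_ H]] //.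
    by rewrite ev eqxx in nv.
  have gx : forall t1 t2, t1 < t2 -> t2 < N -> fxy t1 = Some y -> fxy t2 = Some y ->
      exists u, t1 < u < t2 /\ (u = x1 \/ u = x2 \/ u = x3).
    move=> t1 t2 H12 H2 F1 F2; have [u [v' [Hu Fu nv]]] := B t1 t2 y (leq0n _) H12 ltac:(lia) F1 F2.
    exists u; split => //; case: (fxy_some Fu) => [[_ H]|[ev _]] //.
    by rewrite ev eqxx in nv.
  have [u1 [U1 V1]] := gy x1 x2 ltac:(lia) ltac:(lia) (fxy_x (t:=x1) ltac:(auto)) (fxy_x (t:=x2) ltac:(auto)).
  have [u2 [U2 V2]] := gy x2 x3 ltac:(lia) ltac:(lia) (fxy_x (t:=x2) ltac:(auto)) (fxy_x (t:=x3) ltac:(auto)).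
  have [u3 [U3 V3]] := gx y1 y2 ltac:(lia) ltac:(lia) (fxy_y (t:=y1) ltac:(auto)) (fxy_y (t:=y2) ltac:(auto)).
  have [u4 [U4 V4]] := gx y2 y3 ltac:(lia) ltac:(lia) (fxy_y (t:=y2) ltac:(auto)) (fxy_y (t:=y3) ltac:(auto)).
  rewrite /ilv; clear -hx hy U1 V1 U2 V2 U3 V3 U4 V4.
  case: V1 => [->|[->|->]] in U1 *; case: V2 => [->|[->|->]] in U2 *;
  case: V3 => [->|[->|->]] in U3 *; case: V4 => [->|[->|->]] in U4 *; lia.
- move=> I t1 t2 v _ H12 H2 F1 F2.
  case: (fxy_some F1) (fxy_some F2) => [[ev E1]|[ev E1]] [[ev' E2]|[ev' E2]];
    subst v; try (by move: ev'; move/eqP; rewrite ?(negbTE xy) ?(negbTE yx)).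
  + have : (t1 < y1 < t2) \/ (t1 < y2 < t2) \/ (t1 < y3 < t2) by clear -I H12 E1 E2 hx hy; rewrite /ilv in I; case: E1 => [->|[->|->]] in H12 *; case: E2 => [->|[->|->]] in H12 *; lia.
    move=> Hu; exists (if t1 < y1 < t2 then y1 else if t1 < y2 < t2 then y2 else y3), y.
    split => //.
    * by case: ifP => [->//|H1]; case: ifP => [->//|H3]; lia.
    * by apply: fxy_y; case: ifP => _; auto; case: ifP => _; auto.
  + have : (t1 < x1 < t2) \/ (t1 < x2 < t2) \/ (t1 < x3 < t2) by clear -I H12 E1 E2 hx hy; rewrite /ilv in I; case: E1 => [->|[->|->]] in H12 *; case: E2 => [->|[->|->]] in H12 *; lia.
    move=> Hu; exists (if t1 < x1 < t2 then x1 else if t1 < x2 < t2 then x2 else x3), x.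
    split => //.
    * by case: ifP => [->//|H1]; case: ifP => [->//|H3]; lia.
    * by apply: fxy_x; case: ifP => _; auto; case: ifP => _; auto.
Qed.
End Ilv.
Lemma lt_enc S r1 r2 g1 g2 : r1 < S -> r2 < S ->
  (g1 * S + r1 < g2 * S + r2) = (g1 < g2) || ((g1 == g2) && (r1 < r2)).
Proof.
move=> h1 h2; case: (ltngtP g1 g2) => H /=.
- have : g1.+1 * S <= g2 * S by rewrite leq_mul2r H orbT.
  rewrite mulSn; lia.
- have : g2.+1 * S <= g1 * S by rewrite leq_mul2r H orbT.
  rewrite mulSn; lia.
- subst; lia.
Qed.
Lemma eq_enc S r1 r2 g1 g2 : r1 < S -> r2 < S ->
  (g1 * S + r1 == g2 * S + r2) = (g1 == g2) && (r1 == r2).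
Proof.
move=> h1 h2; have A := @lt_enc S r1 r2 g1 g2 h1 h2; have B := @lt_enc S r2 r1 g2 g1 h2 h1; lia.
Qed.


Section W.
Variable k : nat.
Local Notation m := k.-1.
Definition SS := k.-1 + 2.
Definition gaps (v : F1V k) : seq nat :=
  match v with
  | inl j => [:: (j : nat); j + m; j + 2 * m]
  | inr (inl j) => [:: j + odd j * m; j + 2 + odd j * m; j + 2 + m + odd j * m]
  | inr (inr false) => [:: m; 2 * m - 1; 3 * m - 1]
  | inr (inr true) => [:: 0; m; 2 * m + 1]
  end.
Definition rank (v : F1V k) : nat :=
  match v with
  | inl _ => m.+1
  | inr (inl j) => j.+1
  | inr (inr false) => m
  | inr (inr true) => 0
  end.
Definition times (v : F1V k) := [seq g * SS + rank v | g <- gaps v].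
Definition NN := 3 * m * SS.
Definition word := flatten [seq [seq v <- enum (F1V k) | t \in times v] | t <- iota 0 NN].

Lemma filter_word (x y : F1V k) x1 x2 x3 y1 y2 y3 :
  x != y -> times x = [:: x1; x2; x3] -> times y = [:: y1; y2; y3] ->
  (forall t, t \in times x -> t \in times y -> False) ->
  filter (fun z => (z == x) || (z == y)) word = pmap (fxy x y x1 x2 x3 y1 y2 y3) (iota 0 NN).
Proof.
move=> nxy Tx Ty D; rewrite /word; elim: (iota 0 NN) => [|t l IH] //=.
rewrite filter_cat IH -filter_predI /fxy -Tx -Ty.
case: ifP => Hx.
  have -> : [seq v <- enum (F1V k) | predI (fun z => (z == x) || (z == y)) (fun v => t \in times v) v] = [:: x].
    rewrite -(filter_pred1_uniq (enum_uniq (F1V k)) (mem_enum _ x)); apply: eq_filter.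
    move=> v /=; case: (eqVneq v x) => [->|nvx]; first by rewrite Hx.
    case: (eqVneq v y) => [->|//]; rewrite /=; apply/negbTE/negP => Hy.
    exact: (D t Hx Hy).
  by [].
case: ifP => Hy.
  have -> : [seq v <- enum (F1V k) | predI (fun z => (z == x) || (z == y)) (fun v => t \in times v) v] = [:: y].
    rewrite -(filter_pred1_uniq (enum_uniq (F1V k)) (mem_enum _ y)); apply: eq_filter.
    move=> v /=; case: (eqVneq v y) => [->|nvy]; first by rewrite Hy orbT.
    by case: (eqVneq v x) => [->|//]; rewrite Hx andbF.
  by [].
have -> : [seq v <- enum (F1V k) | predI (fun z => (z == x) || (z == y)) (fun v => t \in times v) v] = [::].
  rewrite -(filter_pred0 (enum (F1V k))); apply: eq_filter.
  move=> v /=; case: (eqVneq v y) => [->|nvy]; first by rewrite Hy andbF.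
  by case: (eqVneq v x) => [->|//]; rewrite Hx andbF.
by [].
Qed.

Definition lexlt g r h s := (g < h) || ((g == h) && (r < s)).
Definition ilvl g1 g2 g3 r h1 h2 h3 s :=
  (lexlt g1 r h1 s /\ lexlt h1 s g2 r /\ lexlt g2 r h2 s /\ lexlt h2 s g3 r /\ lexlt g3 r h3 s) \/
  (lexlt h1 s g1 r /\ lexlt g1 r h2 s /\ lexlt h2 s g2 r /\ lexlt g2 r h3 s /\ lexlt h3 s g3 r).

Lemma alt_iff2 (x y : F1V k) g1 g2 g3 h1 h2 h3 r s :
  x != y -> gaps x = [:: g1; g2; g3] -> gaps y = [:: h1; h2; h3] -> rank x = r -> rank y = s ->
  g1 < g2 < g3 -> h1 < h2 < h3 -> g3 < 3 * m -> h3 < 3 * m -> r < SS -> s < SS ->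
  (r != s \/ (g1 != h1 /\ g1 != h2 /\ g1 != h3 /\ g2 != h1 /\ g2 != h2 /\ g2 != h3 /\
              g3 != h1 /\ g3 != h2 /\ g3 != h3)) ->
  alternate word x y <-> ilvl g1 g2 g3 r h1 h2 h3 s.
Proof.
move=> nxy Gx Gy Rx Ry og oh bg bh rS sS D.
have Tx : times x = [:: g1 * SS + r; g2 * SS + r; g3 * SS + r] by rewrite /times Gx Rx.
have Ty : times y = [:: h1 * SS + s; h2 * SS + s; h3 * SS + s] by rewrite /times Gy Ry.
have E := fun a b => @eq_enc SS r s a b rS sS.
have L1 := fun a b => @lt_enc SS r s a b rS sS.
have L2 := fun a b => @lt_enc SS s r a b sS rS.
have L3 := fun a b => @lt_enc SS r r a b rS rS.
have L4 := fun a b => @lt_enc SS s s a b sS sS.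
have dd : forall a b, a \in [:: g1; g2; g3] -> b \in [:: h1; h2; h3] ->
   a * SS + r != b * SS + s.
  move=> a b; rewrite !inE => /or3P [] /eqP -> /or3P [] /eqP ->; rewrite E; lia.
rewrite /alternate (filter_word nxy Tx Ty); last first.
  move=> t; rewrite /times Gx Gy Rx Ry => /mapP [a Ha ->] /mapP [b Hb /eqP].
  by rewrite (negbTE (dd a b Ha Hb)).
have hx : g1 * SS + r < g2 * SS + r < g3 * SS + r by rewrite !L3; lia.
have hy : h1 * SS + s < h2 * SS + s < h3 * SS + s by rewrite !L4; lia.
have xN : g3 * SS + r < NN.
  have : g3.+1 * SS <= 3 * m * SS by rewrite leq_mul2r bg orbT.
  rewrite mulSn /NN; lia.
have yN : h3 * SS + s < NN.
  have : h3.+1 * SS <= 3 * m * SS by rewrite leq_mul2r bh orbT.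
  rewrite mulSn /NN; lia.
have I1 : g1 \in [:: g1; g2; g3] by rewrite !inE eqxx.
have I2 : g2 \in [:: g1; g2; g3] by rewrite !inE eqxx ?orbT.
have I3 : g3 \in [:: g1; g2; g3] by rewrite !inE eqxx ?orbT.
have J1 : h1 \in [:: h1; h2; h3] by rewrite !inE eqxx.
have J2 : h2 \in [:: h1; h2; h3] by rewrite !inE eqxx ?orbT.
have J3 : h3 \in [:: h1; h2; h3] by rewrite !inE eqxx ?orbT.
rewrite nocons_between (ilv_between nxy hx hy (dd _ _ I1 J1) (dd _ _ I1 J2) (dd _ _ I1 J3)
  (dd _ _ I2 J1) (dd _ _ I2 J2) (dd _ _ I2 J3) (dd _ _ I3 J1) (dd _ _ I3 J2) (dd _ _ I3 J3) xN yN).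
by rewrite /ilv /ilvl /lexlt !L1 !L2.
Qed.
End W.


Lemma word_all k (x : F1V k) : 5 <= k -> x \in word k.
Proof.
move=> k5.
have R : rank x < SS k by case: x => [i|[j|[]]] /=; [have := ltn_ord i | have := ltn_ord j | |]; rewrite /SS; lia.
have [g [l [Gx G]]] : exists g l, gaps x = g :: l /\ g < 3 * k.-1.
  case: x {R} => [i|[j|[]]] /=; [have := ltn_ord i | have := ltn_ord j; case: (odd j) => /= | |];
  move=> *; (eexists; eexists; split; [reflexivity|lia]).
apply/flatten_mapP; exists (g * SS k + rank x).
  rewrite mem_iota /= add0n /NN.
  have : g.+1 * SS k <= 3 * k.-1 * SS k by rewrite leq_mul2r G orbT.
  rewrite mulSn; lia.
by rewrite mem_filter mem_enum andbT /times Gx inE eqxx.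
Qed.

Ltac fin := rewrite /ilvl /lexlt /SS /=;
  repeat match goal with |- context [odd ?j] => let H := fresh in have H := odd_double_half j; case: (odd j) H => /= H end;
  lia.

Theorem lemma13 (k : nat) : odd k -> (5 <= k)%N ->
  word_representable (@F1adj k).
Proof.
move=> ok k5; exists (word k); split; first by move=> x; exact: word_all.
have kq : k = (k./2).*2.+1 by rewrite -{1}(odd_double_half k) ok.
move=> x y.
case: x => [i|[i|[]]]; case: y => [j|[j|[]]] => nxy;
  try (have Hi := ltn_ord i); try (have Hj := ltn_ord j);
  try (have Hij : (i : nat) != j by apply: contraNneq nxy => /val_inj ->);
  try (by move: nxy; rewrite eqxx);
  (eapply iff_trans; last (apply: iff_sym; apply: (alt_iff2 nxy erefl erefl erefl erefl)));
  [ | fin ..].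
all: fin.
Qed.
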